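(* For every integer $k\geq 6$, \[ H^+(k+1,k) = \{ 2^{k-1} + 2^{k-5} + 2^{k-6},\ 2^{k-1} + 2^{k-3},\ 2^{k-1} + 2^{k-2},\ 2^{k}\}.\]
   Context: Let $\mathbb{H}^n=\{0,1\}^n\subseteq\mathbb{R}^n$. For $n\geq k$, $H(n,k)=\{\,|\mathbb{H}^k\cap L^{-1}(\mathbb{H}^{n-k})| : L:\mathbb{R}^k\to\mathbb{R}^{n-k}\text{ linear}\,\}$ (equivalently, the set of possible sizes of intersections of a $k$-dimensional linear subspace of $\mathbb{R}^n$ with $\mathbb{H}^n$), and $H^+(n,k)=H(n,k)\setminus\{1,\dots,2^{k-1}\}$. *)

(* Defs.v *)
From HB Require Import structures.
From mathcomp Require Import all_boot all_order all_algebra.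
From mathcomp Require Import Rstruct.

Set Implicit Arguments.
Unset Strict Implicit.
Unset Printing Implicit Defensive.

Import Order.TTheory GRing.Theory Num.Theory.
Local Open Scope ring_scope.

Definition cube_pt (k : nat) (b : {ffun 'I_k -> bool}) : 'rV[Rdefinitions.R]_k :=
  \row_i (b i)%:R.

(* |H^k ∩ L^{-1}(H^(n-k))| for a linear map L : R^k -> R^(n-k), given by the
   matrix L acting on row vectors (x |-> x *m L). *)
Definition cube_preimage_card (k m : nat) (L : 'M[Rdefinitions.R]_(k, m)) : nat :=
  #|[set b : {ffun 'I_k -> bool} |
      [forall j : 'I_m, ((cube_pt b *m L) 0 j == 0) || ((cube_pt b *m L) 0 j == 1)]]|.

Definition Hset (n k : nat) (s : nat) : Prop :=
  exists L : 'M[Rdefinitions.R]_(k, n - k), s = cube_preimage_card L.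

Definition Hplus (n k : nat) (s : nat) : Prop :=
  Hset n k s /\ ~ (1 <= s <= 2 ^ (k - 1))%N.

(* Main.v *)
Require Import Defs.
From mathcomp Require Import all_boot all_order all_algebra.
From HB Require Import structures.
From mathcomp Require Import Rstruct lra zify.
Set Implicit Arguments.
Unset Strict Implicit.
Unset Printing Implicit Defensive.
Import Order.TTheory GRing.Theory Num.Theory.
Local Open Scope ring_scope.
Notation R := Rdefinitions.R.
Local Open Scope nat_scope.
Lemma count_sets (X : finType) (T : {set X}) (P : pred nat) :
 #|[set B : {set X} | P #|B :&: T|]| = #|[set A : {set X} | A \subset T & P #|A|]| * 2 ^ #|~: T|.
Proof.
pose phi (B : {set X}) := (B :&: T, B :&: ~: T).
have phi_inj : injective phi.
  move=> B1 B2 [h1 h2].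
  by rewrite -(setID B1 T) -(setID B2 T) !setDE h1 h2.
rewrite -card_powerset -cardsX -(card_imset _ phi_inj).
apply: eq_card => [[A C]]; rewrite !inE /=.
apply/imsetP/andP => [[B]|[/andP[AT PA] CT]].
  rewrite inE => PB [-> ->]; split; first by rewrite subsetIr PB.
  by rewrite subsetIr.
exists (A :|: C); first by rewrite inE setIUl (setIidPl AT) (_ : C :&: T = set0) ?setU0 //;
  apply/setP=> x; rewrite !inE; apply/andP => -[xC xT]; move: (subsetP CT x xC); rewrite inE xT.
rewrite /phi setIUl (setIidPl AT) setIUl (setIidPl CT).
have -> : C :&: T = set0.
  by apply/setP=> x; rewrite !inE; apply/andP => -[xC xT]; move: (subsetP CT x xC); rewrite inE xT.
have -> : A :&: ~: T = set0.
  by apply/setP=> x; rewrite !inE; apply/andP => -[xA]; rewrite (subsetP AT x xA).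
by rewrite setU0 set0U.
Qed.

Lemma count_two (X : finType) (T : {set X}) q :
  #|[set A : {set X} | A \subset T & (#|A| == q) || (#|A| == q.+1)]| = 'C(#|T|, q.+1) + 'C(#|T|, q).
Proof.
rewrite -!cards_draws addnC -cardsUI.
have -> : [set A : {set X} | A \subset T & #|A| == q] :&: [set A : {set X} | A \subset T & #|A| == q.+1] = set0.
  apply/setP => A; rewrite !inE; apply/negbTE; apply/negP => /andP[/andP[_ /eqP ->] /andP[_]].
  by rewrite eqn_leq ltnn andbF.
rewrite cards0 addn0; apply: eq_card => A; rewrite !inE; by case: (A \subset T).
Qed.

Local Open Scope ring_scope.

Definition sumb k (c : 'I_k -> R) (b : {ffun 'I_k -> bool}) : R := \sum_i (b i)%:R * c i.
Definition Ncnt k (c : 'I_k -> R) := #|[set b | (sumb c b == 0) || (sumb c b == 1)]|.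

Lemma sum_ind k (A : {set 'I_k}) : \sum_i ((i \in A)%:R : R) = #|A|%:R.
Proof.
rewrite -natr_sum -sum1_card; congr (_%:R).
by rewrite [RHS]big_mkcond; apply: eq_bigr => i _; case: (i \in A).
Qed.

Lemma sumb_unit k (c : 'I_k -> R) (hc : forall i, c i = 0 \/ c i = 1 \/ c i = -1) b :
  sumb c b = #|[set i | b i (+) (c i == -1)] :&: [set i | c i != 0]|%:R
             - #|[set i | c i == -1]|%:R.
Proof.
have h0 : ((0:R) == -1) = false by apply/negbTE; rewrite eq_sym oppr_eq0 oner_eq0.
have h1 : ((1:R) == -1) = false by apply/negbTE/eqP => H; lra.
rewrite -!sum_ind -sumrB /sumb; apply: eq_bigr => i _; rewrite !inE.
case: (hc i) => [->|[->|->]].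
- by rewrite eqxx andbF mulr0 h0 subr0.
- by rewrite h1 oner_eq0 /= addbF andbT subr0 mulr1.
- rewrite eqxx oppr_eq0 oner_eq0 andbT /=.
  by case: (b i) => /=; rewrite ?mul0r ?mul1r ?subrr // sub0r.
Qed.

Lemma Ncnt_unit k (c : 'I_k -> R) (hc : forall i, c i = 0 \/ c i = 1 \/ c i = -1) :
  Ncnt c = ('C(#|[set i | c i != 0%R]|.+1, #|[set i | c i == (-1)%R]|.+1)
            * 2 ^ (k - #|[set i | c i != 0%R]|))%N.
Proof.
set Q := [set i | c i == -1]; set T := [set i | c i != 0].
pose f (b : {ffun 'I_k -> bool}) : {set 'I_k} := [set i | b i (+) (i \in Q)].
pose g (B : {set 'I_k}) : {ffun 'I_k -> bool} := [ffun i => (i \in B) (+) (i \in Q)].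
have -> : Ncnt c = #|f @^-1: [set B : {set 'I_k} | (#|B :&: T| == #|Q|) || (#|B :&: T| == #|Q|.+1)]|.
  apply: eq_card => b; rewrite !inE sumb_unit //.
  have -> : f b = [set i | b i (+) (c i == -1)] by apply/setP => i; rewrite !inE.
  rewrite subr_eq0 eqr_nat subr_eq (_ : 1 + #|Q|%:R = (#|Q|.+1)%:R :> R); last first.
    by rewrite -addn1 natrD addrC.
  by rewrite eqr_nat.
rewrite on_card_preimset; last first.
  apply: onW_bij; exists g => [b|B].
    by apply/ffunP => i; rewrite ffunE inE addbK.
  by apply/setP => i; rewrite inE ffunE addbK.
move: (count_sets T (fun x => (x == #|Q|) || (x == #|Q|.+1))%N) => /= ->.
rewrite count_two binS; congr (_ * 2 ^ _)%N.
have h := cardsC T; rewrite card_ord in h.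
move: h; move: #|T| #|~: T| => a b h; lia.
Qed.

Lemma Ncnt_nonunit k (c : 'I_k -> R) i0
  (hn : ~~ [|| c i0 == 0, c i0 == 1 | c i0 == -1]) : (2 * Ncnt c <= 2 ^ k)%N.
Proof.
rewrite /Ncnt; set S := [set b | _].
pose fl (b : {ffun 'I_k -> bool}) := [ffun i => if i == i0 then ~~ b i else b i].
have flK : involutive fl.
  by move=> b; apply/ffunP => i; rewrite !ffunE; case: (i == i0) => //; rewrite negbK.
have key b : sumb c (fl b) = sumb c b + (if b i0 then - c i0 else c i0).
  rewrite /sumb (bigD1 i0) //= [in RHS](bigD1 i0) //= ffunE eqxx.
  rewrite (eq_bigr (fun i => (b i)%:R * c i)); last first.
    by move=> i /negbTE ne; rewrite ffunE ne.
  by case: (b i0); rewrite /= ?mul0r ?mul1r; lra.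
have disj : fl @: S \subset ~: S.
  apply/subsetP => b' /imsetP[b bS ->]; rewrite !inE; apply/negP.
  move: bS; rewrite inE key.
  move=> /orP[/eqP h1|/eqP h1] /orP[/eqP h2|/eqP h2]; move: h2;
  case: (b i0) => h2;
  (first [ have E : c i0 = 0 by lra | have E : c i0 = 1 by lra | have E : c i0 = -1 by lra ]);
  by move: hn; rewrite E eqxx ?orbT.
have h1 := subset_leq_card disj.
rewrite card_imset in h1; last exact: inv_inj.
have h2 := cardsC S.
rewrite card_ffun card_bool card_ord in h2.
move: h1 h2; move: #|S| #|~: S| => a b' h1 h2; lia.
Qed.

Local Open Scope nat_scope.
Lemma bin_bound m j : 'C(m + 9, j) <= 2 ^ (m + 7).
Proof.
elim: m j => [|m IH] j.
  have [hj|hj] := leqP j 9; last by rewrite bin_small.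
  by move: j hj; do 10! case => //.
case: j => [|j]; first by rewrite bin0 expn_gt0.
rewrite addSn binS (_ : (m.+1 + 7) = (m + 7).+1) // expnS mul2n -addnn.
exact: leq_add.
Qed.

Lemma pow_split a b k : a <= b -> b <= k -> 2 ^ (k - a) = 2 ^ (b - a) * 2 ^ (k - b).
Proof. by move=> ab bk; rewrite -expnD; congr (2 ^ _); lia. Qed.

Ltac cnorm := repeat match goal with
  | |- context [binomial ?a ?b] => let v := eval vm_compute in (binomial a b) in change (binomial a b) with v
  | |- context [expn ?a ?b] => let v := eval vm_compute in (expn a b) in change (expn a b) with v
  end.

Lemma arith k t q : 6 <= k -> q <= t -> t <= k ->
  2 ^ (k - 1) < 'C(t.+1, q.+1) * 2 ^ (k - t) ->
  (('C(t.+1, q.+1) * 2 ^ (k - t)) = 2 ^ (k - 1) + 2 ^ (k - 5) + 2 ^ (k - 6)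
   \/ ('C(t.+1, q.+1) * 2 ^ (k - t)) = 2 ^ (k - 1) + 2 ^ (k - 3)
   \/ ('C(t.+1, q.+1) * 2 ^ (k - t)) = 2 ^ (k - 1) + 2 ^ (k - 2)
   \/ ('C(t.+1, q.+1) * 2 ^ (k - t)) = 2 ^ k).
Proof.
move=> hk qt tk h.
have t7 : t <= 7.
  rewrite leqNgt; apply/negP => t8.
  have := bin_bound (t - 8) q.+1; rewrite (_ : t - 8 + 9 = t.+1); last by lia.
  rewrite (_ : t - 8 + 7 = t - 1); last by lia.
  move=> hb; move: h; rewrite (@pow_split 1 t k) //; last by lia.
  by move=> h; have := leq_mul hb (leqnn (2 ^ (k - t))); rewrite leqNgt h.
have E a : a <= 6 -> 2 ^ (k - a) = 2 ^ (6 - a) * 2 ^ (k - 6).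
  by move=> ha; exact: pow_split.
have Ek : 2 ^ k = 2 ^ 6 * 2 ^ (k - 6) by rewrite -(E 0) ?subn0.
rewrite Ek (E 1) // (E 2) // (E 3) // (E 5) // (E 6) //.
rewrite (E 1) // in h.
case: (leqP t 6) => t6.
  rewrite (E t) // in h *.
  move: (2 ^ (k - 6)) h => Y.
  case: t t6 t7 tk qt => [|[|[|[|[|[|[|t]]]]]]] t6 t7 tk qt //;
  case: q qt => [|[|[|[|[|[|[|q]]]]]]] qt //= h; move: h; cnorm; lia.
have E7 : t = 7 by lia.
subst t.
have k7 : 7 <= k by [].
rewrite (@pow_split 6 7 k) // in h *.
move: (2 ^ (k - 7)) h => Y.
case: q qt => [|[|[|[|[|[|[|[|q]]]]]]]] qt //= h; move: h; cnorm; lia.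
Qed.

Local Open Scope ring_scope.

Definition j0 k : 'I_(k.+1 - k) := Ordinal (ltac:(by rewrite subSnn) : (0 < k.+1 - k)%N).

Lemma card_red k (L : 'M[R]_(k, k.+1 - k)) :
  cube_preimage_card L = Ncnt (fun i => L i (j0 k)).
Proof.
rewrite /cube_preimage_card /Ncnt; apply: eq_card => b; rewrite !inE.
have e j : (cube_pt b *m L) 0 j = sumb (fun i => L i j) b.
  by rewrite !mxE; apply: eq_bigr => i _; rewrite mxE.
apply/forallP/idP => [H|H j].
  by have := H (j0 k); rewrite e.
have -> : j = j0 k.
  by apply: val_inj => /=; have := ltn_ord j; move: (nat_of_ord j) => n; rewrite subSnn; case: n.
by rewrite e.
Qed.

Lemma Ncnt_ext k (c1 c2 : 'I_k -> R) : c1 =1 c2 -> Ncnt c1 = Ncnt c2.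
Proof.
move=> e; apply: eq_card => b; rewrite !inE /sumb.
by rewrite (eq_bigr (fun i => (b i)%:R * c2 i)) // => i _; rewrite e.
Qed.

Lemma card_lt k a : (a <= k)%N -> #|[set i : 'I_k | (i < a)%N]| = a.
Proof.
move=> ak.
have -> : [set i : 'I_k | (i < a)%N] = (widen_ord ak) @: [set: 'I_a].
  apply/setP => i; rewrite inE; apply/idP/imsetP => [ia | [j _ ->]].
    by exists (Ordinal ia) => //; apply: val_inj.
  by rewrite /= ltn_ord.
rewrite card_imset ?cardsT ?card_ord //.
by move=> x y /(congr1 val) /= /val_inj.
Qed.

Lemma Ncnt_ge1 k (c : 'I_k -> R) : (1 <= Ncnt c)%N.
Proof.
apply/card_gt0P; exists [ffun=> false]; rewrite inE /sumb big1 ?eqxx //.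
by move=> i _; rewrite ffunE mul0r.
Qed.

Lemma realize k t q : (q <= t)%N -> (t <= k)%N -> Hset k.+1 k ('C(t.+1, q.+1) * 2 ^ (k - t))%N.
Proof.
move=> qt tk.
pose c (i : 'I_k) : R := if (i < q)%N then -1 else if (i < t)%N then 1 else 0.
exists (\matrix_(i, j) c i); rewrite card_red (@Ncnt_ext _ _ c); last by move=> i; rewrite mxE.
have hc i : c i = 0 \/ c i = 1 \/ c i = -1.
  by rewrite /c; case: ifP => _; [right; right|case: ifP => _; [right; left|left]].
have h0 : ((1:R) == -1) = false by apply/negbTE/eqP => H; lra.
rewrite Ncnt_unit //.
have -> : [set i | c i != 0] = [set i : 'I_k | (i < t)%N].
  apply/setP => i; rewrite !inE /c.
  case: ifP => iq; first by rewrite oppr_eq0 oner_eq0 (leq_trans iq qt).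
  by case: ifP => it; rewrite ?oner_eq0 ?eqxx.
have -> : [set i | c i == -1] = [set i : 'I_k | (i < q)%N].
  apply/setP => i; rewrite !inE /c.
  case: ifP => iq; first by rewrite eqxx.
  case: ifP => it; first by rewrite h0.
  by apply/negbTE; rewrite eq_sym oppr_eq0 oner_eq0.
by rewrite !card_lt // (leq_trans qt tk).
Qed.

Theorem corollary3p3 (k : nat) (hk : (6 <= k)%N) (s : nat) :
  Hplus k.+1 k s <->
  (s = 2 ^ (k - 1) + 2 ^ (k - 5) + 2 ^ (k - 6)
   \/ s = 2 ^ (k - 1) + 2 ^ (k - 3)
   \/ s = 2 ^ (k - 1) + 2 ^ (k - 2)
   \/ s = 2 ^ k)%N.
Proof.
split.
  move=> [[L ->] hn]; rewrite card_red in hn *.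
  set c := fun i => L i (j0 k).
  have hlt : (2 ^ (k - 1) < Ncnt c)%N.
    have := Ncnt_ge1 c; move: hn; move: (Ncnt c) => N hn h1.
    rewrite ltnNge; apply/negP => hle; apply: hn; by apply/andP.
  case: (boolP [forall i, [|| c i == 0, c i == 1 | c i == -1]]) => [/forallP hc|].
    have hc' i : c i = 0 \/ c i = 1 \/ c i = -1.
      by case/or3P: (hc i) => /eqP ->; [left|right; left|right; right].
    rewrite Ncnt_unit // in hlt *.
    apply: arith => //.
      apply: subset_leq_card; apply/subsetP => i; rewrite !inE => /eqP ->.
      by rewrite oppr_eq0 oner_eq0.
    by have := max_card [set i | c i != 0]; rewrite card_ord.
  case/forallPn => i0 hi0.
  have := Ncnt_nonunit hi0.
  have e : (2 ^ k = 2 * 2 ^ (k - 1))%N by rewrite -expnS; congr (2 ^ _)%N; lia.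
  rewrite e; move: hlt; move: (Ncnt c) (2 ^ (k - 1))%N => N X; lia.
have E a : (a <= 6)%N -> (2 ^ (k - a) = 2 ^ (6 - a) * 2 ^ (k - 6))%N.
  by move=> ha; exact: pow_split.
have Ek : (2 ^ k = 2 ^ 6 * 2 ^ (k - 6))%N by rewrite -(E 0) ?subn0.
have Y0 : (0 < 2 ^ (k - 6))%N by rewrite expn_gt0.
have k6 : (6 <= k)%N by [].
move=> H; split; last first.
  move: H; rewrite (E 1) // (E 2) // (E 3) // (E 5) // (E 6) // Ek.
  move: (2 ^ (k - 6))%N Y0 => Y Y0; cnorm; lia.
case: H => [->|[->|[->|->]]].
- suff -> : (2 ^ (k - 1) + 2 ^ (k - 5) + 2 ^ (k - 6) = 'C(7, 3) * 2 ^ (k - 6))%N.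
    by apply: (@realize k 6 2) => //; apply: leq_trans hk.
  rewrite (E 1) // (E 5) // (E 6) //; move: (2 ^ (k - 6))%N => Y; cnorm; lia.
- suff -> : (2 ^ (k - 1) + 2 ^ (k - 3) = 'C(5, 2) * 2 ^ (k - 4))%N.
    by apply: (@realize k 4 1) => //; apply: leq_trans hk.
  rewrite (E 1) // (E 3) // (E 4) //; move: (2 ^ (k - 6))%N => Y; cnorm; lia.
- suff -> : (2 ^ (k - 1) + 2 ^ (k - 2) = 'C(3, 1) * 2 ^ (k - 2))%N.
    by apply: (@realize k 2 0) => //; apply: leq_trans hk.
  rewrite (E 1) // (E 2) //; move: (2 ^ (k - 6))%N => Y; cnorm; lia.
- suff -> : (2 ^ k = 'C(1, 1) * 2 ^ (k - 0))%N.
    by apply: (@realize k 0 0) => //; apply: leq_trans hk.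
  by rewrite subn0 bin1 mul1n.
Qed.
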